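(* Let $\lambda>0$, $p\in(0,1)$, $\lambda_{max}>0$, $R>0$, and for $q\in[0,1]$ let $f_1(q)=\frac{pq}{p+q-pq}$ and $C_1(q)=\lambda f_1(q)\exp\!\big(-\frac{\lambda f_1(q)}{\lambda_{max}}\big)R$. If $\frac{\lambda_{max}}{\lambda}\le p$, then $q^\star=\frac{p\lambda_{max}}{\lambda p-\lambda_{max}(1-p)}\in(0,1]$ maximizes $C_1$ over $[0,1]$; if $\frac{\lambda_{max}}{\lambda}>p$, then $q^\star=1$ maximizes $C_1$ over $[0,1]$.
   Context: This is the unit battery capacity ($B=1$) case of the ALOHA energy-harvesting model: $f_1(q)$ is the probability that a transmitter (energy arrivals i.i.d. Bernoulli($p$) per slot, battery of capacity $1$, transmits with probability $q$ when the battery is nonempty) transmits in a slot, and $C_1(q)$ is the transmission capacity of a Poisson network of density $\lambda$ with $\lambda_{max}=\frac{1}{d^2\theta^{2/\alpha}\kappa(\alpha)}$, $\kappa(\alpha)=\frac{2\pi^2}{\alpha\sin(2\pi/\alpha)}$, $R=\log(1+\theta)$. *)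

(* Defs.v *)
From Stdlib Require Import Reals.
Open Scope R_scope.

Definition ftx1 (p q : R) : R := p * q / (p + q - p * q).

Definition cap1 (lam lmax rate p q : R) : R :=
  lam * ftx1 p q * exp (- (lam * ftx1 p q / lmax)) * rate.

Definition maximizes_on_01 (g : R -> R) (qs : R) : Prop :=
  0 <= qs <= 1 /\ forall q, 0 <= q <= 1 -> g q <= g qs.

(* Main.v *)
Require Import Defs.
From Stdlib Require Import Reals Lra.
Open Scope R_scope.

Lemma key (lam lmax x y : R) : 0 < lam -> 0 < lmax -> 0 <= y ->
  0 <= (y - x) * (1 - lam * y / lmax) ->
  x * exp (- (lam * x / lmax)) <= y * exp (- (lam * y / lmax)).
Proof.
  intros Hl Hm Hy H.
  assert (E : exp (- (lam * x / lmax)) = exp (- (lam * y / lmax)) * exp (lam * (y - x) / lmax)).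
  { rewrite <- exp_plus. f_equal. field. lra. }
  assert (E2 : y * exp (- (lam * y / lmax)) = (y * exp ((lam * (x - y) / lmax))) * exp (- (lam * x / lmax))).
  { rewrite Rmult_assoc, <- exp_plus. f_equal. f_equal. field. lra. }
  rewrite E2.
  apply Rmult_le_compat_r. left; apply exp_pos.
  pose proof (exp_ineq1_le (lam * (x - y) / lmax)) as Hi.
  assert (y * (1 + lam * (x - y) / lmax) <= y * exp (lam * (x - y) / lmax)) by
    (apply Rmult_le_compat_l; lra).
  assert (y * (1 + lam * (x - y) / lmax) - x = (y - x) * (1 - lam * y / lmax)) by (field; lra).
  lra.
Qed.

Lemma ftx_bounds (p q : R) : 0 < p < 1 -> 0 <= q <= 1 -> 0 <= ftx1 p q <= p.
Proof.
  intros Hp Hq. unfold ftx1.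
  assert (D : 0 < p + q - p * q) by nra.
  split.
  - unfold Rdiv; apply Rmult_le_pos; [nra|left; apply Rinv_0_lt_compat; lra].
  - apply Rmult_le_reg_r with (p + q - p * q); auto.
    unfold Rdiv; rewrite Rmult_assoc, Rinv_l by lra. nra.
Qed.

Lemma cap_le (lam lmax rate p q qs : R) : 0 < lam -> 0 < lmax -> 0 < rate ->
  0 <= ftx1 p qs ->
  0 <= (ftx1 p qs - ftx1 p q) * (1 - lam * ftx1 p qs / lmax) ->
  cap1 lam lmax rate p q <= cap1 lam lmax rate p qs.
Proof.
  intros. unfold cap1.
  pose proof (key lam lmax (ftx1 p q) (ftx1 p qs) H H0 H2 H3).
  apply Rmult_le_compat_r; [lra|].
  rewrite !Rmult_assoc. apply Rmult_le_compat_l; lra.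
Qed.

Theorem corollary1 (lam p lmax rate : R) :
  0 < lam -> 0 < p < 1 -> 0 < lmax -> 0 < rate ->
  (lmax / lam <= p ->
     0 < p * lmax / (lam * p - lmax * (1 - p)) <= 1 /\
     maximizes_on_01 (cap1 lam lmax rate p) (p * lmax / (lam * p - lmax * (1 - p)))) /\
  (lmax / lam > p -> maximizes_on_01 (cap1 lam lmax rate p) 1).
Proof.
  intros Hl Hp Hm Hr. split.
  - intro Hc.
    assert (Hc' : lmax <= lam * p).
    { apply Rmult_le_compat_l with (r := lam) in Hc; [|lra].
      replace (lam * (lmax / lam)) with lmax in Hc by (field; lra). lra. }
    assert (D : 0 < lam * p - lmax * (1 - p)) by nra.
    assert (Hq : 0 < p * lmax / (lam * p - lmax * (1 - p)) <= 1).
    { split. apply Rdiv_lt_0_compat; nra.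
      apply Rmult_le_reg_r with (lam * p - lmax * (1 - p)); auto.
      unfold Rdiv; rewrite Rmult_assoc, Rinv_l by lra. nra. }
    assert (Dq : p + p * lmax / (lam * p - lmax * (1 - p)) - p * (p * lmax / (lam * p - lmax * (1 - p))) = p * p * lam / (lam * p - lmax * (1 - p))).
    { field. lra. }
    assert (F : ftx1 p (p * lmax / (lam * p - lmax * (1 - p))) = lmax / lam).
    { unfold ftx1. rewrite Dq. field. split; [lra|split; lra]. }
    split; [exact Hq|]. split; [lra|].
    intros q Hq1. apply cap_le; auto.
    + rewrite F. unfold Rdiv; apply Rmult_le_pos; [lra|left; apply Rinv_0_lt_compat; lra].
    + rewrite F. replace (lam * (lmax / lam) / lmax) with 1 by (field; lra). lra.
  - intro Hc. split; [lra|]. intros q Hq.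
    assert (F1 : ftx1 p 1 = p) by (unfold ftx1; field; lra).
    assert (Hlp : lam * p < lmax).
    { apply Rmult_lt_compat_l with (r := lam) in Hc; [|lra].
      replace (lam * (lmax / lam)) with lmax in Hc by (field; lra). lra. }
    pose proof (ftx_bounds p q Hp Hq).
    apply cap_le; auto; rewrite F1; [lra|].
    apply Rmult_le_pos; [lra|].
    assert (lam * p / lmax < 1).
    { apply Rmult_lt_reg_r with lmax; auto. unfold Rdiv; rewrite Rmult_assoc, Rinv_l by lra. lra. }
    lra.
Qed.
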